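(* Let $\mathbb{R}^{Nn\times Nn}_{s*}$ be the space of fourth-order tensors $\Xi=(\Xi_{\alpha i\beta j})$ ($\alpha,\beta\in\{1,\dots,N\}$, $i,j\in\{1,\dots,n\}$) satisfying $\Xi_{\alpha i\beta j}=\Xi_{\beta j\alpha i}=\Xi_{\beta i\alpha j}$. Then the relation $\Xi\le_\otimes\Theta$ is a partial ordering on $\mathbb{R}^{Nn\times Nn}_{s*}$ (reflexive, transitive and antisymmetric).
   Context: For fourth-order tensors, $\Xi\le_\otimes\Theta$ means $(\Theta-\Xi)_{\alpha i\beta j}\eta_\alpha w_i\eta_\beta w_j\ge0$ for all $\eta\in\mathbb{R}^N$ and $w\in\mathbb{R}^n$ (summation over repeated indices). *)

(* Defs.v *)
From mathcomp Require Import all_boot all_order all_algebra.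
Set Implicit Arguments. Unset Strict Implicit. Unset Printing Implicit Defensive.
Import Order.TTheory GRing.Theory Num.Theory.
Local Open Scope ring_scope.

Definition tensor4 (R : Type) (N n : nat) := 'I_N -> 'I_n -> 'I_N -> 'I_n -> R.

Definition sym_star (R : Type) (N n : nat) (X : tensor4 R N n) : Prop :=
  forall (a : 'I_N) (i : 'I_n) (b : 'I_N) (j : 'I_n),
    X a i b j = X b j a i /\ X b j a i = X b i a j.

Definition le_otimes (R : realFieldType) (N n : nat) (X Y : tensor4 R N n) : Prop :=
  forall (eta : 'I_N -> R) (w : 'I_n -> R),
    0 <= \sum_(a < N) \sum_(i < n) \sum_(b < N) \sum_(j < n)
           (Y a i b j - X a i b j) * eta a * w i * eta b * w j.

(* Main.v *)
Require Import Defs.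
From mathcomp Require Import all_boot all_order all_algebra.
From mathcomp Require Import reals.
From mathcomp Require Import ring lra.
From Stdlib Require Import FunctionalExtensionality.
Import Order.TTheory GRing.Theory Num.Theory.
Local Open Scope ring_scope.

Section Aux.
Variable R : realFieldType.

Lemma sum_ind m (c : 'I_m) (G : 'I_m -> R) :
  \sum_(x < m) (x == c)%:R * G x = G c.
Proof.
rewrite (bigD1 c) //= eqxx mul1r big1 ?addr0 // => x /negbTE ->.
by rewrite mul0r.
Qed.

Lemma sum_ind2 m (c d : 'I_m) (G : 'I_m -> R) :
  \sum_(x < m) ((x == c)%:R + (x == d)%:R) * G x = G c + G d.
Proof.
under eq_bigr do rewrite mulrDl.
by rewrite big_split /= !sum_ind.
Qed.

Lemma quad_zero m (F : 'I_m -> 'I_m -> R) :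
  (forall x y, F x y = F y x) ->
  (forall u : 'I_m -> R, \sum_(x < m) \sum_(y < m) u x * u y * F x y = 0) ->
  forall x y, F x y = 0.
Proof.
move=> Fs H.
have H1 c : F c c = 0.
  have := H (fun x => (x == c)%:R).
  under eq_bigr do (under eq_bigr do rewrite -mulrA; rewrite -mulr_sumr sum_ind).
  by rewrite sum_ind.
move=> a b.
have := H (fun x => (x == a)%:R + (x == b)%:R).
under eq_bigr do (under eq_bigr do rewrite -mulrA; rewrite -mulr_sumr sum_ind2).
rewrite sum_ind2 => E.
have := H1 a; have := H1 b; have := Fs a b. lra.
Qed.

Variables N n : nat.
Implicit Types F G : 'I_N -> 'I_n -> 'I_N -> 'I_n -> R.

Lemma sum4D F G :
  \sum_(a < N) \sum_(i < n) \sum_(b < N) \sum_(j < n) F a i b j +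
  \sum_(a < N) \sum_(i < n) \sum_(b < N) \sum_(j < n) G a i b j =
  \sum_(a < N) \sum_(i < n) \sum_(b < N) \sum_(j < n) (F a i b j + G a i b j).
Proof.
rewrite -big_split; apply: eq_bigr => a _.
rewrite -big_split; apply: eq_bigr => i _.
rewrite -big_split; apply: eq_bigr => b _.
by rewrite -big_split.
Qed.

Lemma sum4N F :
  - \sum_(a < N) \sum_(i < n) \sum_(b < N) \sum_(j < n) F a i b j =
  \sum_(a < N) \sum_(i < n) \sum_(b < N) \sum_(j < n) - F a i b j.
Proof.
rewrite -sumrN; apply: eq_bigr => a _.
rewrite -sumrN; apply: eq_bigr => i _.
rewrite -sumrN; apply: eq_bigr => b _.
by rewrite -sumrN.
Qed.

Lemma sum4_reorg (D : tensor4 R N n) eta w :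
  \sum_(a < N) \sum_(i < n) \sum_(b < N) \sum_(j < n)
     D a i b j * eta a * w i * eta b * w j =
  \sum_(a < N) \sum_(b < N) eta a * eta b *
     (\sum_(i < n) \sum_(j < n) w i * w j * D a i b j).
Proof.
apply: eq_bigr => a _; rewrite exchange_big /=; apply: eq_bigr => b _.
rewrite mulr_sumr; apply: eq_bigr => i _.
rewrite mulr_sumr; apply: eq_bigr => j _.
by rewrite !mulrA; ring.
Qed.

End Aux.

Theorem corollary3 (R : realType) (N n : nat) :
  (forall X : tensor4 R N n, sym_star X -> le_otimes X X) /\
  (forall X Y Z : tensor4 R N n, sym_star X -> sym_star Y -> sym_star Z ->
     le_otimes X Y -> le_otimes Y Z -> le_otimes X Z) /\
  (forall X Y : tensor4 R N n, sym_star X -> sym_star Y ->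
     le_otimes X Y -> le_otimes Y X -> X = Y).
Proof.
split; [|split].
- move=> X _ eta w.
  rewrite big1 // => a _; rewrite big1 // => i _; rewrite big1 // => b _.
  by rewrite big1 // => j _; rewrite subrr !mul0r.
- move=> X Y Z _ _ _ HXY HYZ eta w.
  have := addr_ge0 (HYZ eta w) (HXY eta w); rewrite sum4D.
  congr (_ <= _); apply: eq_bigr => a _; apply: eq_bigr => i _;
    apply: eq_bigr => b _; apply: eq_bigr => j _; ring.
- move=> X Y sX sY HXY HYX.
  pose D : tensor4 R N n := fun a i b j => Y a i b j - X a i b j.
  have sD a i b j : D a i b j = D b i a j.
    rewrite /D; case: (sX a i b j) => -> ->; by case: (sY a i b j) => -> ->.
  have Q0 eta w : \sum_(a < N) \sum_(i < n) \sum_(b < N) \sum_(j < n)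
       D a i b j * eta a * w i * eta b * w j = 0.
    apply/eqP; rewrite eq_le HXY andbT -oppr_ge0 sum4N.
    have := HYX eta w; congr (_ <= _).
    apply: eq_bigr => a _; apply: eq_bigr => i _;
      apply: eq_bigr => b _; apply: eq_bigr => j _; rewrite /D; ring.
  have M0 w a b : \sum_(i < n) \sum_(j < n) w i * w j * D a i b j = 0.
    apply: (@quad_zero R _ (fun a b => \sum_(i < n) \sum_(j < n) w i * w j * D a i b j)).
    + move=> x y; apply: eq_bigr => i _; apply: eq_bigr => j _; by rewrite sD.
    + by move=> u; rewrite -sum4_reorg.
  have D0 a i b j : D a i b j = 0.
    apply: (@quad_zero R _ (fun i j => D a i b j)) => //.
    move=> x y; rewrite /D (proj1 (sX a x b y)) (proj2 (sX a x b y)) (proj1 (sX b x a y)).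
    by rewrite (proj1 (sY a x b y)) (proj2 (sY a x b y)) (proj1 (sY b x a y)).
  apply: functional_extensionality => a; apply: functional_extensionality => i.
  apply: functional_extensionality => b; apply: functional_extensionality => j.
  by have := D0 a i b j; rewrite /D => /eqP; rewrite subr_eq0 => /eqP.
Qed.
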